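(* Let $q$ be a prime power and $n \ge 1$. Let $a : M_n(\mathbb{F}_q) \to \mathbb{R}$ be a factorization function. Then there is a function $\varphi : M_n(\mathbb{F}_q) \to \mathbb{R}$ of von Mangoldt type such that $\varphi(f) = a(f)$ for all squarefree $f \in M_n(\mathbb{F}_q)$.
   Context: $M_n(\mathbb{F}_q)$ is the set of monic degree-$n$ polynomials in $\mathbb{F}_q[x]$. A factorization function is a function $a : M_n(\mathbb{F}_q) \to \mathbb{R}$ such that whenever $f = P_1^{e_1}\cdots P_k^{e_k}$ with $P_i$ distinct monic irreducible polynomials, $a(f)$ depends only on the data $(\deg P_1, e_1; \dots; \deg P_k, e_k)$. For $(z_1,\dots,z_n) \in \overline{\mathbb{F}}_q^{\,n}$ and $\sigma \in S_n$, $\delta_\sigma(z_1,\dots,z_n) = 1$ if $\mathrm{Frob}_q(z_1,\dots,z_n) = \sigma(z_1,\dots,z_n)$ (Frobenius $z\mapsto z^q$ applied coordinatewise equals the permutation $\sigma$ of coordinates) and $0$ otherwise. A function $\varphi$ is of von Mangoldt type if there are real coefficients $(c_\sigma)_{\sigma \in S_n}$ with $\varphi(f) = \sum_{(z_1,\dots,z_n) \in \overline{\mathbb{F}}_q^{\,n},\, f = \prod_i (x - z_i)} \sum_{\sigma \in S_n} c_\sigma \delta_\sigma(z_1,\dots,z_n)$ for all $f$. *)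

(* Defs.v *)
From HB Require Import structures.
From mathcomp Require Import all_boot all_order all_algebra all_fingroup all_field.
From mathcomp Require Import boolp classical_sets fsbigop reals.
Set Implicit Arguments. Unset Strict Implicit. Unset Printing Implicit Defensive.
Import Order.TTheory GRing.Theory Num.Theory.
Local Open Scope ring_scope.

Definition monic_deg (F : fieldType) (n : nat) (f : {poly F}) : Prop :=
  f \is monic /\ size f = n.+1.

Definition squarefree_poly (F : fieldType) (f : {poly F}) : Prop :=
  forall g : {poly F}, (1 < size g)%N -> ~~ (g * g %| f).

(* a : M_n(F) -> R is a factorization function: a(f) depends only on the
   data (deg P_1, e_1; ...; deg P_k, e_k) of the factorization of f into
   distinct monic irreducibles P_i with exponents e_i >= 1 (up to reordering,
   which is absorbed in the choice of indexing of the Q_i). *)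
Definition factorization_function (F : fieldType) (R : nzRingType) (n : nat)
    (a : {poly F} -> R) : Prop :=
  forall (k : nat) (P Q : 'I_k -> {poly F}) (e : 'I_k -> nat) (f g : {poly F}),
    monic_deg n f -> monic_deg n g ->
    injective P -> injective Q ->
    (forall i, P i \is monic /\ irreducible_poly (P i)) ->
    (forall i, Q i \is monic /\ irreducible_poly (Q i)) ->
    (forall i, 0 < e i)%N ->
    (forall i, size (P i) = size (Q i)) ->
    f = \prod_(i < k) P i ^+ e i ->
    g = \prod_(i < k) Q i ^+ e i ->
    a f = a g.

Definition delta (F : finFieldType) (L : fieldType) (n : nat) (R : nzRingType)
    (s : 'S_n) (z : n.-tuple L) : R :=
  if [forall i : 'I_n, tnth z i ^+ #|F| == tnth z (s i)] then 1 else 0.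

Definition root_tuples (F : fieldType) (L : fieldType) (iota : {rmorphism F -> L})
    (n : nat) (f : {poly F}) : set (n.-tuple L) :=
  [set z | map_poly iota f = \prod_(i < n) ('X - (tnth z i)%:P)].

Definition von_mangoldt_type (F : finFieldType) (L : fieldType)
    (iota : {rmorphism F -> L}) (R : realType) (n : nat)
    (c : 'S_n -> R) (phi : {poly F} -> R) : Prop :=
  forall f : {poly F}, monic_deg n f ->
    phi f = \sum_(z \in @root_tuples F L iota n f)
              \sum_(s : 'S_n) c s * delta F R s z.

(* Main.v *)
Require Import Defs.
From HB Require Import structures.
From mathcomp Require Import all_boot all_order all_algebra all_fingroup all_solvable all_field.
From mathcomp Require Import boolp classical_sets fsbigop reals.
Set Implicit Arguments. Unset Strict Implicit. Unset Printing Implicit Defensive.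
Import Order.TTheory GRing.Theory Num.Theory.
Local Open Scope ring_scope.

Section Frob.
Variables (F : finFieldType) (L : fieldType) (iota : {rmorphism F -> L}).

Lemma pnat_card : [pchar L].-nat #|F|.
Proof.
have [p pr_p pcharFp] := finPcharP F.
have := abelem_pgroup (fin_ring_pchar_abelem pcharFp).
rewrite /pgroup cardsT => H.
have pL : p \in [pchar L] by rewrite (fmorph_pchar iota).
by rewrite (eq_pnat _ (pcharf_eq pL)).
Qed.

Definition frob (x : L) : L := (fun _ : {rmorphism F -> L} => x ^+ #|F|) iota.

Lemma frob_nmod : nmod_morphism frob.
Proof.
split; first by rewrite /frob /= expr0n; case: #|F| (finNzRing_gt1 F).
by move=> x y; rewrite /frob /= exprDn_pchar // pnat_card.
Qed.
Lemma frob_monoid : monoid_morphism frob.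
Proof. by split=> [|x y]; rewrite /frob /= ?expr1n ?exprMn. Qed.

HB.instance Definition _ := GRing.isNmodMorphism.Build L L frob frob_nmod.
HB.instance Definition _ := GRing.isMonoidMorphism.Build L L frob frob_monoid.

Lemma frob_inj : injective frob.
Proof. exact: fmorph_inj. Qed.

Lemma frob_iota c : frob (iota c) = iota c.
Proof. by rewrite /frob /= -rmorphXn expf_card. Qed.

Lemma frob_map_iota (p : {poly F}) : map_poly frob (map_poly iota p) = map_poly iota p.
Proof. by rewrite -map_poly_comp; apply: eq_map_poly => c /=; rewrite frob_iota. Qed.

Lemma frob_fixed x : frob x = x -> exists c, x = iota c.
Proof.
move=> fx.
have := congr1 (map_poly iota) (finField_genPoly F).
rewrite rmorphB /= map_polyXn map_polyX rmorph_prod /= => E.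
have : root (map_poly iota ('X^#|F| - 'X)) x.
  by rewrite rmorphB /= map_polyXn map_polyX rootE !hornerE -/(frob x) fx subrr.
rewrite rmorphB /= map_polyXn map_polyX E rootE horner_prod.
rewrite prodf_seq_eq0 => /hasP[c _ /=].
rewrite map_polyXsubC hornerXsubC subr_eq0 => /eqP ->; by exists c.
Qed.

Definition pre (x : L) : F := odflt 0 [pick c | iota c == x].

Definition liftp (p : {poly L}) : {poly F} := \poly_(i < size p) pre p`_i.

Lemma liftpK (p : {poly L}) : (forall i, frob p`_i = p`_i) ->
  map_poly iota (liftp p) = p.
Proof.
move=> fp; apply/polyP => i; rewrite coef_map coef_poly.
case: ltnP => hi /=; last by rewrite rmorph0 nth_default.
have [c ->] := frob_fixed (fp i).
rewrite /pre; case: pickP => [d /eqP //|/(_ c)]; by rewrite eqxx.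
Qed.

Lemma lift_poly (p : {poly L}) : (forall i, frob p`_i = p`_i) ->
  exists P : {poly F}, map_poly iota P = p.
Proof. by move=> fp; exists (liftp p); apply: liftpK. Qed.


Lemma prod_XsubC_dvd (s t : seq L) :
  (forall x, count_mem x s <= count_mem x t)%N ->
  \prod_(x <- s) ('X - x%:P) %| \prod_(x <- t) ('X - x%:P).
Proof.
elim: s t => [|y s IH] t H; first by rewrite big_nil dvd1p.
have yt : y \in t.
  by rewrite -has_pred1 has_count; apply: leq_trans (H y); rewrite /= eqxx.
rewrite big_cons (perm_big _ (perm_to_rem yt)) big_cons dvdp_mul2l ?polyXsubC_eq0 //.
apply: IH => x; have := H x; rewrite /= count_rem yt /=.
case: (eqVneq x y) => [->|nxy] /=; last by rewrite add0n subn0.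
by rewrite add1n => h; rewrite leq_subRL ?add1n // (leq_trans _ h).
Qed.

Lemma map_frob_prod (s : seq L) :
  map_poly frob (\prod_(x <- s) ('X - x%:P)) = \prod_(x <- map frob s) ('X - x%:P).
Proof. by rewrite map_prod_XsubC big_map. Qed.

Lemma frob_perm (f : {poly F}) (s : seq L) :
  map_poly iota f = \prod_(x <- s) ('X - x%:P) -> perm_eq (map frob s) s.
Proof.
move=> E; apply: prod_XsubC_eq.
by rewrite -map_frob_prod -E frob_map_iota.
Qed.

Lemma count_frob (s : seq L) y : perm_eq (map frob s) s ->
  count_mem (frob y) s = count_mem y s.
Proof.
move=> P; rewrite -(seq.permP P) count_map; apply: eq_count => x /=.
by rewrite /= (inj_eq frob_inj).
Qed.

Definition squarefreeP (f : {poly F}) :=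
  forall g : {poly F}, (1 < size g)%N -> ~~ (g * g %| f).

Lemma squarefree_uniq (f : {poly F}) (s : seq L) :
  map_poly iota f = \prod_(x <- s) ('X - x%:P) -> squarefreeP f -> uniq s.
Proof.
move=> E sqf; have P := frob_perm E.
apply: count_mem_uniq => x; apply/eqP/negPn/negP => Hx.
pose O := [seq y <- undup s | (1 < count_mem y s)%N].
have inO y : (y \in O) = (1 < count_mem y s)%N.
  rewrite mem_filter mem_undup andb_idr // => h.
  by rewrite -has_pred1 has_count; apply: leq_trans h.
have xO : x \in O.
  rewrite inO; move: Hx; case xs: (x \in s) => /=.
    have : (0 < count_mem x s)%N by rewrite -has_count has_pred1.
    by case: (count_mem x s) => [|[|]].
  by move: xs => /negbT/count_memPn ->.
have Ou : uniq O by rewrite filter_uniq ?undup_uniq.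
have PO : perm_eq (map frob O) O.
  have U : uniq (map frob O) by rewrite map_inj_uniq // ; exact: frob_inj.
  have sub : {subset map frob O <= O}.
    by move=> _ /mapP[y yO ->]; rewrite inO count_frob // -inO.
  have [Hs Hi] := uniq_min_size U sub (eq_leq (esym (size_map _ _))).
  exact: uniq_perm.
have [g Eg] : exists g, map_poly iota g = \prod_(y <- O) ('X - y%:P).
  apply: lift_poly => i; rewrite -coef_map map_frob_prod.
  by rewrite (perm_big _ PO).
have sg : (1 < size g)%N.
  rewrite -(size_map_poly iota) Eg size_prod_XsubC ltnS lt0n size_eq0.
  by apply/eqP => O0; rewrite O0 in xO.
apply: (negP (sqf g sg)); rewrite -(dvdp_map iota) rmorphM /= Eg E -big_cat.
apply: prod_XsubC_dvd => y; rewrite count_cat count_uniq_mem //.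
by case yO: (y \in O); move: yO; rewrite inO /=; case: (count_mem y s) => [|[|]].
Qed.

End Frob.

Section Cyc.
Variables (F : finFieldType) (L : closedFieldType) (iota : {rmorphism F -> L}) (n : nat).
Local Notation frob := (@frob F L iota).

Definition rt (f : {poly F}) (z : n.-tuple L) :=
  map_poly iota f = \prod_(i < n) ('X - (tnth z i)%:P).
Definition frel (s : 'S_n) (z : n.-tuple L) := forall i, frob (tnth z i) = tnth z (s i).

Lemma tuple_prod (z : n.-tuple L) :
  \prod_(i < n) ('X - (tnth z i)%:P) = \prod_(x <- z) ('X - x%:P).
Proof. by rewrite big_tuple. Qed.

Lemma rt_frob f z : rt f z -> forall i, frob (tnth z i) \in z.
Proof.
move=> E i; have P := frob_perm (etrans E (tuple_prod z)).
by rewrite -(perm_mem P); apply: map_f; apply: mem_tnth.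
Qed.

Definition sig_fun (z : n.-tuple L) (i : 'I_n) : 'I_n :=
  odflt i [pick j | tnth z j == frob (tnth z i)].

Lemma sig_funE f z i : rt f z -> tnth z (sig_fun z i) = frob (tnth z i).
Proof.
move=> E; rewrite /sig_fun; case: pickP => [j /eqP //|H].
have /tnthP[j Hj] := rt_frob E i.
by have := H j; rewrite -Hj eqxx.
Qed.

Lemma frel_exists f z : rt f z -> uniq z -> exists s, frel s z.
Proof.
move=> E /tuple_uniqP U.
have inj : injective (sig_fun z).
  move=> i j H; have := congr1 (tnth z) H; rewrite !(sig_funE _ E) => /frob_inj.
  exact: U.
by exists (perm inj) => i; rewrite permE (sig_funE _ E).
Qed.

Lemma frel_uniq (z : n.-tuple L) (s t : 'S_n) : uniq z -> frel s z -> frel t z -> s = t.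
Proof.
by move=> /tuple_uniqP U Hs Ht; apply/permP => i; apply: U; rewrite -Hs -Ht.
Qed.

Definition pz (z : n.-tuple L) (C : {set 'I_n}) :=
  \prod_(j in C) ('X - (tnth z j)%:P).

Lemma orbit_stable (s : 'S_n) C j : C \in porbits s -> (s j \in C) = (j \in C).
Proof.
case/imsetP => x _ ->.
by rewrite porbit_sym; have := porbit_perm s 1 j; rewrite expg1 => ->; rewrite porbit_sym.
Qed.

Lemma pz_frob (s : 'S_n) (z : n.-tuple L) (C : {set 'I_n}) : frel s z -> C \in porbits s -> map_poly frob (pz z C) = pz z C.
Proof.
move=> Hs HC; rewrite /pz map_prod_XsubC [RHS](reindex_inj (@perm_inj _ s)) /=.
by apply: eq_big => j; [rewrite orbit_stable | rewrite Hs].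
Qed.

Lemma pz_root (z : n.-tuple L) (C : {set 'I_n}) r : root (pz z C) r -> exists2 j, j \in C & r = tnth z j.
Proof.
rewrite rootE /pz horner_prod => /prodf_eq0[j jC].
by rewrite hornerXsubC subr_eq0 => /eqP ->; exists j.
Qed.

Lemma pz_rootE (z : n.-tuple L) (C : {set 'I_n}) j : j \in C -> root (pz z C) (tnth z j).
Proof.
by move=> jC; rewrite rootE /pz horner_prod; apply/prodf_eq0; exists j => //; rewrite hornerXsubC subrr.
Qed.

Lemma size_pz (z : n.-tuple L) (C : {set 'I_n}) : size (pz z C) = #|C|.+1.
Proof. by rewrite /pz -big_enum size_prod_XsubC cardE. Qed.

Lemma monic_pz (z : n.-tuple L) (C : {set 'I_n}) : pz z C \is monic.
Proof. exact: monic_prod_XsubC. Qed.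

Lemma frel_iter (s : 'S_n) (z : n.-tuple L) (j : 'I_n) (k : nat) : frel s z -> tnth z ((s ^+ k)%g j) = iter k frob (tnth z j).
Proof.
move=> Hs; rewrite permX; elim: k => //= k IH.
by rewrite -Hs IH.
Qed.

Lemma root_frob (d : {poly F}) r : root (map_poly iota d) r -> root (map_poly iota d) (frob r).
Proof.
rewrite !rootE => /eqP H; rewrite -(frob_map_iota iota d).
by rewrite horner_map H rmorph0.
Qed.

Lemma liftpzK (s : 'S_n) (z : n.-tuple L) (C : {set 'I_n}) : frel s z -> C \in porbits s ->
  map_poly iota (liftp iota (pz z C)) = pz z C.
Proof.
by move=> Hs HC; apply: liftpK => i; rewrite -coef_map (pz_frob Hs HC).
Qed.

Lemma pz_irr (s : 'S_n) (z : n.-tuple L) (C : {set 'I_n}) : uniq z -> frel s z -> C \in porbits s ->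
  irreducible_poly (liftp iota (pz z C)).
Proof.
move=> U Hs HC; set P := liftp iota (pz z C).
have EP : map_poly iota P = pz z C by apply: liftpzK.
have P0 : P != 0.
  by rewrite -(map_poly_eq0 iota) EP monic_neq0 ?monic_pz.
split.
  rewrite -(size_map_poly iota) EP size_pz ltnS lt0n.
  by case/imsetP: HC => x _ ->; apply: card_porbit_neq0.
move=> d sd dP.
have d0 : d != 0 by apply: contra_neq P0 => d0; move: dP; rewrite d0 dvd0p => /eqP.
have dz : map_poly iota d %| pz z C by rewrite -EP dvdp_map.
have [r rr] : exists r, root (map_poly iota d) r.
  by apply/closed_rootP; rewrite size_map_poly.
have [j jC rj] := pz_root (root_dvdp dz rr); rewrite rj in rr.
have allr : forall j', j' \in C -> root (map_poly iota d) (tnth z j').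
  move=> j' j'C.
  have : j' \in porbit s j.
    case/imsetP: HC jC j'C => x _ -> jx j'x.
    by have /eqP -> : porbit s j == porbit s x by rewrite eq_porbit_mem.
  case/porbitP => k ->; rewrite (frel_iter _ _ Hs).
  by elim: k => //= k IH; apply: root_frob.
have pzd : pz z C %| map_poly iota d.
  rewrite /pz -big_enum -(big_map (tnth z) predT (fun x => 'X - x%:P)).
  apply: uniq_roots_dvdp.
    by apply/allP => _ /mapP[j' j'C ->]; apply: allr; rewrite -mem_enum.
  rewrite uniq_rootsE map_inj_uniq ?enum_uniq //.
  by move/tuple_uniqP: U.
have s1 : (size P <= size d)%N.
  rewrite -(size_map_poly iota d) -(size_map_poly iota P) EP.
  by apply: dvdp_leq => //; rewrite map_poly_eq0.
have s2 : (size d <= size P)%N by apply: dvdp_leq.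
by rewrite -dvdp_size_eqp // eqn_leq s1 s2.
Qed.


Lemma perm_of (z w : n.-tuple L) (g : L -> L) : injective g -> uniq z ->
  (forall i, g (tnth z i) \in w) -> exists t : 'S_n, forall i, g (tnth z i) = tnth w (t i).
Proof.
move=> gi /tuple_uniqP U Hw.
pose h i := odflt i [pick j | tnth w j == g (tnth z i)].
have hE i : tnth w (h i) = g (tnth z i).
  rewrite /h; case: pickP => [j /eqP //|H].
  have /tnthP[j Hj] := Hw i.
  by have := H j; rewrite -Hj eqxx.
have inj : injective h.
  move=> i j H; have := congr1 (tnth w) H; rewrite !hE => /gi.
  exact: U.
by exists (perm inj) => i; rewrite permE hE.
Qed.

Lemma cycle_fact (f : {poly F}) (z : n.-tuple L) (s : 'S_n) :
  rt f z -> uniq z -> frel s z ->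
  let P := fun i : 'I_#|porbits s| => liftp iota (pz z (enum_val i)) in
  [/\ f = \prod_(i < #|porbits s|) P i ^+ 1, injective P,
      forall i, P i \is monic /\ irreducible_poly (P i) &
      forall i, size (P i) = #|(enum_val i : {set 'I_n})|.+1].
Proof.
move=> E U Hs P.
have HC i : enum_val i \in porbits s := enum_valP i.
have EP i : map_poly iota (P i) = pz z (enum_val i) := liftpzK Hs (HC i).
split.
- apply: (@map_poly_inj _ _ iota); rewrite E rmorph_prod.
  under [RHS]eq_bigr => i _ do rewrite /= expr1 EP.
  rewrite -(big_enum_val (pz z)).
  rewrite (partition_big (porbit s) (mem (porbits s))) /=; last first.
    by move=> i _; apply: imset_f.
  apply: eq_bigr => C HC'; rewrite /pz; apply: eq_bigl => i.
  by case/imsetP: HC' => x _ ->; rewrite eq_porbit_mem.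
- move=> i j Pij; apply: enum_val_inj.
  have := congr1 (map_poly iota) Pij; rewrite !EP => Ez.
  case/imsetP: (HC i) => x _ Ex.
  have : root (pz z (enum_val j)) (tnth z x) by rewrite -Ez Ex pz_rootE // porbit_id.
  case/pz_root => y yC; move/tuple_uniqP: U => Ui /Ui xy.
  case/imsetP: (HC j) => w _ Ew.
  rewrite Ex Ew; apply/eqP; rewrite eq_porbit_mem xy -Ew //.
- move=> i; split; last exact: pz_irr.
  by rewrite -(map_monic iota) EP; apply: monic_pz.
- by move=> i; rewrite -(size_map_poly iota) EP size_pz.
Qed.

End Cyc.

Unset Implicit Arguments.
Unset Strict Implicit.

Theorem proposition4p6 (F : finFieldType) (L : closedFieldType)
    (iota : {rmorphism F -> L}) (R : realType) (n : nat) (a : {poly F} -> R) :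
  (0 < n)%N -> @factorization_function F R n a ->
  exists (c : 'S_n -> R) (phi : {poly F} -> R),
    @von_mangoldt_type F L iota R n c phi /\
    (forall f : {poly F}, monic_deg n f -> squarefree_poly f -> phi f = a f).
Proof.
move=> n0 fact.
pose Good (s : 'S_n) (f : {poly F}) := monic_deg n f /\ squarefree_poly f /\
  exists z, rt iota f z /\ frel iota s z.
have key : forall s f g, Good s f -> Good s g -> a f = a g.
  move=> s f g [mf [sf [z [Ez Hz]]]] [mg [sg [w [Ew Hw]]]].
  have Uz : uniq z := squarefree_uniq (etrans Ez (tuple_prod z)) sf.
  have Uw : uniq w := squarefree_uniq (etrans Ew (tuple_prod w)) sg.
  have [Ef Pinj Pirr Psz] := cycle_fact Ez Uz Hz.
  have [Eg Qinj Qirr Qsz] := cycle_fact Ew Uw Hw.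
  apply: (fact _ _ _ (fun _ => 1%N) f g mf mg Pinj Qinj Pirr Qirr _ _ Ef Eg) => //.
  by move=> i; rewrite Psz Qsz.
pose c s := match pselect (exists f, Good s f) with
  | left h => a (projT1 (cid h)) / (n`!)%:R | right _ => 0 end.
have cE : forall s f, Good s f -> c s = a f / (n`!)%:R.
  move=> s f G; rewrite /c; case: pselect => [h|h]; last by exfalso; apply: h; exists f.
  by case: (cid h) => g Gg /=; rewrite (key s g f Gg G).
exists c, (fun f => \sum_(z \in @root_tuples F L iota n f) \sum_(s : 'S_n) c s * @delta F L n R s z).
split; first by [].
move=> f mf sf.
have [r Er] := closed_field_poly_normal (map_poly iota f).
have mfi : map_poly iota f \is monic by rewrite map_monic; case: mf.
rewrite (monicP mfi) scale1r in Er.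
have sr : size r == n.
  have := size_map_poly iota f; rewrite Er size_prod_XsubC; case: mf => _ ->.
  by case=> ->.
pose z0 := Tuple sr.
have E0 : rt iota f z0 by rewrite /rt tuple_prod.
have U0 : uniq z0 := squarefree_uniq (etrans E0 (tuple_prod z0)) sf.
have rtE : forall z : n.-tuple L, rt iota f z -> perm_eq z z0.
  by move=> z Ez; apply: prod_XsubC_eq; rewrite -!tuple_prod -Ez -E0.
have inner : forall z : n.-tuple L, rt iota f z ->
    \sum_(s : 'S_n) c s * @delta F L n R s z = a f / (n`!)%:R.
  move=> z Ez; have Uz : uniq z by rewrite (perm_uniq (rtE z Ez)).
  have [s0 Hs0] := frel_exists Ez Uz.
  rewrite (bigD1 s0) //= big1 ?addr0.
    rewrite /delta; have -> : [forall i, tnth z i ^+ #|F| == tnth z (s0 i)].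
      by apply/forallP => i; apply/eqP; rewrite -Hs0.
    rewrite mulr1; apply: cE; split=> //; split=> //; by exists z.
  move=> s ns; rewrite /delta; case: ifP => [/forallP H|]; last by rewrite mulr0.
  exfalso; move/eqP: ns; apply; apply: (frel_uniq Uz) => // i.
  exact/eqP/H.
pose tup (t : 'S_n) : n.-tuple L := [tuple tnth z0 (t i) | i < n].
have tup_inj : injective tup.
  move=> t1 t2 H; apply/permP => i; have := congr1 (fun x => tnth x i) H.
  rewrite /= !tnth_mktuple; move/tuple_uniqP: U0; apply.
have tup_rt : forall t, rt iota f (tup t).
  move=> t; rewrite /rt E0 (reindex_inj (@perm_inj _ t)) /=.
  by apply: eq_bigr => i _; rewrite tnth_mktuple.
have tup_sur : forall z : n.-tuple L, rt iota f z -> exists t, z = tup t.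
  move=> z Ez; have Uz : uniq z by rewrite (perm_uniq (rtE z Ez)).
  have [t Ht] := @perm_of _ _ z z0 id (fun x y => id) Uz
    (fun i => etrans (esym (perm_mem (rtE z Ez) _)) (mem_tnth i z)).
  by exists t; apply: eq_from_tnth => i; rewrite tnth_mktuple -Ht.
rewrite (fsbigE [seq tup t | t <- enum 'S_n]).
- rewrite big_map (eq_bigl xpredT); last first.
    by move=> t /=; apply: mem_set; apply: tup_rt.
  rewrite big_enum /=.
  under eq_bigr => t _ do rewrite inner //.
  rewrite sumr_const card_Sn -[_ *+ n`!]mulr_natr divfK //.
  by rewrite pnatr_eq0 -lt0n fact_gt0.
- by rewrite map_inj_uniq ?enum_uniq.
- by move=> x /= /mapP[t _ ->]; apply: tup_rt.
- move=> z Az nz; exfalso; have [t Et] := tup_sur z Az.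
  by move: nz; rewrite Et map_f ?mem_enum.
Qed.
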